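(* Let $\beta^*\in\mathbb{R}^p$ with support $S$ and $s=|S|$. Let $\ell_0(\beta)=\frac{1}{2t_0}\sum_{j=1}^{t_0}(y_{0j}-x_{0j}^\top\beta)^2$, $\ell_j(\beta)=\frac12(y_j-x_j^\top\beta)^2$ for $j\ge1$, positive weights $w_{t,j}$ with $W_t=\sum_{j=1}^t w_{t,j}$, and $$L_t(\beta;\tilde\beta)=\ell_0(\beta)-\nabla\ell_0(\tilde\beta)^\top\beta+\Big\langle \sum_{j=1}^t\frac{w_{t,j}}{W_t}\nabla\ell_j(\tilde\beta),\beta\Big\rangle .$$ Suppose $\ell_0$ satisfies the RSC condition with parameter $\kappa>0$. Let $\hat\beta_{t-1}\in\mathbb{R}^p$, $\lambda_t>0$ with $\lambda_t\ge2\|\nabla L_t(\beta^*;\hat\beta_{t-1})\|_\infty$, and let $\hat\beta_t$ be a minimizer over $\mathbb{R}^p$ of $\beta\mapsto L_t(\beta;\hat\beta_{t-1})+\lambda_t\|\beta\|_1$. Then $$\|\hat\beta_t-\beta^*\|_1\le\frac{16s}{\kappa}\big(\lambda_t+\|\nabla L_t(\beta^*;\hat\beta_{t-1})\|_\infty\big)\le\frac{24s}{\kappa}\lambda_t$$ and $$\|\hat\beta_t-\beta^*\|_2^2\le\frac{\lambda_t+\|\nabla L_t(\beta^*;\hat\beta_{t-1})\|_\infty}{\kappa}\,\|\hat\beta_t-\beta^*\|_1 .$$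
   Context: A function $f:\mathbb{R}^p\to\mathbb{R}$ satisfies the RSC condition with parameter $\kappa>0$ if for every $\Delta\in\mathcal{C}_S=\{\xi\in\mathbb{R}^p:\|\xi_{S^c}\|_1\le3\|\xi_S\|_1\}$ one has $f(\beta^*+\Delta)-f(\beta^* )-\Delta^\top\nabla f(\beta^* )\ge\kappa\|\Delta\|_2^2$; here $\xi_{\mathcal{A}}$ keeps the entries of $\xi$ indexed by $\mathcal{A}$ and zeroes the others. Gradients of $L_t$ are taken with respect to its first argument. The data points are arbitrary elements of $\mathbb{R}^p\times\mathbb{R}$. *)

(* Defs.v *)
From HB Require Import structures.
From mathcomp Require Import all_boot all_order all_algebra.
From mathcomp Require Import all_classical all_reals all_analysis.
Set Implicit Arguments. Unset Strict Implicit. Unset Printing Implicit Defensive.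
Import Order.TTheory GRing.Theory Num.Theory.
Import numFieldNormedType.Exports.
Local Open Scope ring_scope.

Section Defs.
Variables (R : realType) (p : nat).
Implicit Types (v b : 'rV[R]_p) (f : 'rV[R]_p -> R).

Definition grad f b : 'rV[R]_p := \row_i derive f b (delta_mx 0 i).

Definition inner (u v : 'rV[R]_p) : R := \sum_i u 0 i * v 0 i.
Definition norm1 v : R := \sum_i `|v 0 i|.
Definition norminf v : R := \big[Num.max/0]_i `|v 0 i|.
Definition norm2sq v : R := \sum_i (v 0 i) ^+ 2.

Definition supp v : {set 'I_p} := [set i | v 0 i != 0].
Definition restr (A : {set 'I_p}) v : 'rV[R]_p := \row_i (if i \in A then v 0 i else 0).

Definition cone (S : {set 'I_p}) v : Prop := norm1 (restr (~: S) v) <= 3 * norm1 (restr S v).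

Definition RSC f (bstar : 'rV[R]_p) (kappa : R) : Prop :=
  forall D, cone (supp bstar) D ->
    f (bstar + D) - f bstar - inner D (grad f bstar) >= kappa * norm2sq D.

Definition ell0 (t0 : nat) (x0 : 'I_t0 -> 'rV[R]_p) (y0 : 'I_t0 -> R) b : R :=
  (2 * t0%:R)^-1 * \sum_(j < t0) (y0 j - inner (x0 j) b) ^+ 2.
Definition ellj (xj : 'rV[R]_p) (yj : R) b : R := 2^-1 * (yj - inner xj b) ^+ 2.

Definition Lt (t0 : nat) (x0 : 'I_t0 -> 'rV[R]_p) (y0 : 'I_t0 -> R)
    (t : nat) (w : nat -> R) (x : nat -> 'rV[R]_p) (y : nat -> R)
    (b bt : 'rV[R]_p) : R :=
  let W := \sum_(1 <= j < t.+1) w j in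
  ell0 x0 y0 b - inner (grad (ell0 x0 y0) bt) b
  + inner (\sum_(1 <= j < t.+1) (w j / W) *: grad (ellj (x j) (y j)) bt) b.

End Defs.

(* Main.v *)
Set Warnings "-all".
Require Import Defs.
From HB Require Import structures.
From mathcomp Require Import all_boot all_order all_algebra.
From mathcomp Require Import all_classical all_reals all_analysis.
Import Order.TTheory GRing.Theory Num.Theory.
Import numFieldNormedType.Exports.
Local Open Scope ring_scope.
From mathcomp Require Import ring lra.
Local Open Scope classical_set_scope.
Set Implicit Arguments. Unset Strict Implicit.

Lemma derive_quad (R : realType) (p : nat) (f : 'rV[R]_p -> R) b v a c :
  (forall h : R, f (h *: v + b) = f b + h * a + h ^+ 2 * c) ->
  derive f b v = a.
Proof.
move=> H; rewrite /derive.
apply: cvg_lim => //.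
have -> : (fun h : R => h^-1 *: ((f \o shift b) (h *: v) - f b)) =
   (fun h => if h == 0 then 0 else a + h * c).
  apply/funext => h /=; rewrite H.
  case: eqP => [->|/eqP h0]; first by rewrite invr0 scale0r.
  rewrite /GRing.scale /=; field; done.
have : (fun h : R => a + h * c) @ 0^' --> a.
  apply: cvg_within_filter.
  have := cvgD (cvg_cst a) (@cvgMr_tmp _ _ _ _ id 0 c (@cvg_id _ (nbhs (0:R)))).
  rewrite mul0r addr0; exact.
apply: cvg_trans; apply: near_eq_cvg; near=> h.
have : h != 0 by near: h; exact: nbhs_dnbhs_neq.
by move/negbTE => ->.
Unshelve. all: by end_near.
Qed.

Section Aux.
Variables (R : realType) (p : nat).
Implicit Types (u v w : 'rV[R]_p).

Lemma innerC u v : inner u v = inner v u.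
Proof. by apply: eq_bigr => i _; rewrite mulrC. Qed.
Lemma innerDr u v w : inner u (v + w) = inner u v + inner u w.
Proof. by rewrite /inner -big_split; apply: eq_bigr => i _; rewrite mxE mulrDr. Qed.
Lemma innerZr u a v : inner u (a *: v) = a * inner u v.
Proof. by rewrite /inner mulr_sumr; apply: eq_bigr => i _; rewrite mxE mulrCA. Qed.
Lemma innerNr u v : inner u (- v) = - inner u v.
Proof. by rewrite /inner -sumrN; apply: eq_bigr => i _; rewrite mxE mulrN. Qed.
Lemma innerBr u v w : inner u (v - w) = inner u v - inner u w.
Proof. by rewrite innerDr innerNr. Qed.
Lemma inner0r u : inner u 0 = 0.
Proof. by rewrite /inner big1 // => i _; rewrite mxE mulr0. Qed.
Lemma inner_sumr (I : finType) u (F : I -> 'rV[R]_p) :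
  inner u (\sum_j F j) = \sum_j inner u (F j).
Proof.
rewrite /inner exchange_big /=; apply: eq_bigr => i _.
by rewrite summxE mulr_sumr.
Qed.
Lemma inner_delta i u : inner (delta_mx 0 i) u = u 0 i.
Proof.
rewrite /inner (bigD1 i) //= big1 ?addr0; first by rewrite mxE !eqxx mul1r.
by move=> j /negbTE ji; rewrite mxE ji andbF mul0r.
Qed.

Variables (t0 : nat) (x0 : 'I_t0 -> 'rV[R]_p) (y0 : 'I_t0 -> R).
Let k : R := (2 * t0%:R)^-1.
Definition Mv (c b : 'rV[R]_p) : 'rV[R]_p :=
  c - (2 * k) *: \sum_j (y0 j - inner (x0 j) b) *: x0 j.
Definition qf v : R := k * \sum_j (inner (x0 j) v) ^+ 2.
Definition Ff (c b : 'rV[R]_p) : R := ell0 x0 y0 b + inner c b.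

Lemma qf_ge0 v : 0 <= qf v.
Proof.
rewrite /qf mulr_ge0 //; last by apply: sumr_ge0 => j _; exact: sqr_ge0.
by rewrite /k invr_ge0 mulr_ge0.
Qed.

Lemma Ff_expand c b v h :
  Ff c (h *: v + b) = Ff c b + h * inner v (Mv c b) + h ^+ 2 * qf v.
Proof.
rewrite /Ff /ell0 /Mv /qf -/k innerBr innerZr inner_sumr.
rewrite innerDr innerZr.
under eq_bigr do rewrite innerDr innerZr.
under [X in _ = _ + _ * (_ - _ * X) + _]eq_bigr do rewrite innerZr (innerC v).
have -> : \sum_j (y0 j - (h * inner (x0 j) v + inner (x0 j) b)) ^+ 2 =
  \sum_j (y0 j - inner (x0 j) b) ^+ 2
  + (- 2 * h) * \sum_j ((y0 j - inner (x0 j) b) * inner (x0 j) v)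
  + h ^+ 2 * \sum_j inner (x0 j) v ^+ 2.
  rewrite !mulr_sumr -!big_split; apply: eq_bigr => j _ /=; ring.
rewrite (innerC v c); ring.
Qed.

Lemma grad_Ff c b : grad (Ff c) b = Mv c b.
Proof.
apply/rowP => i; rewrite mxE.
apply: (@derive_quad _ _ _ _ _ _ (qf (delta_mx 0 i))) => h.
by rewrite Ff_expand inner_delta.
Qed.

Lemma ell0_Ff : ell0 x0 y0 = Ff 0.
Proof. by apply/funext => b; rewrite /Ff innerC inner0r addr0. Qed.

End Aux.

Section Num.
Variables (R : realType) (p : nat).
Implicit Types (u v w : 'rV[R]_p).

Lemma norminf_ge0 v : 0 <= norminf v.
Proof.
rewrite /norminf; apply: (big_ind (fun x => 0 <= x)) => //.
by move=> x y hx hy; rewrite le_max hx.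
Qed.

Lemma le_norminf v i : `|v 0 i| <= norminf v.
Proof. rewrite /norminf; exact: (le_bigmax_cond _ (P := xpredT)). Qed.

Lemma norm1_split (S : {set 'I_p}) v :
  norm1 v = norm1 (restr S v) + norm1 (restr (~: S) v).
Proof.
rewrite /norm1 -big_split; apply: eq_bigr => i _; rewrite !mxE inE.
by case: (i \in S) => /=; rewrite normr0 ?addr0 ?add0r.
Qed.

Lemma inner_bound u v : `|inner u v| <= norminf v * norm1 u.
Proof.
rewrite /norm1 mulr_sumr; apply: le_trans (ler_norm_sum _ _ _) _.
apply: ler_sum => i _; rewrite normrM mulrC ler_wpM2r //; exact: le_norminf.
Qed.

Lemma norm1_diff (b D : 'rV[R]_p) :
  norm1 b - norm1 (b + D) <=
  norm1 (restr (supp b) D) - norm1 (restr (~: supp b) D).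
Proof.
rewrite /norm1 -!sumrB; apply: ler_sum => i _; rewrite !mxE !inE.
case: eqP => [->|_] /=; first by rewrite add0r normr0 !sub0r.
rewrite normr0 subr0.
have := ler_normD (b 0 i + D 0 i) (- D 0 i); rewrite addrK normrN; lra.
Qed.

Lemma cs_restr (S : {set 'I_p}) v :
  norm1 (restr S v) ^+ 2 <= #|S|%:R * norm2sq v.
Proof.
have E : norm1 (restr S v) = \sum_(i in S) `|v 0 i|.
  rewrite /norm1 [RHS]big_mkcond; apply: eq_bigr => i _; rewrite mxE.
  by case: ifP => _ //; rewrite normr0.
have H1 : norm1 (restr S v) ^+ 2 <=
    \sum_(i in S) \sum_(j in S) (v 0 i ^+ 2 + v 0 j ^+ 2) / 2.
  rewrite E expr2 big_distrl /=; apply: ler_sum => i _.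
  rewrite big_distrr /=; apply: ler_sum => j _.
  rewrite -(real_normK (num_real (v 0 i))) -(real_normK (num_real (v 0 j))).
  have := sqr_ge0 (`|v 0 i| - `|v 0 j|); nra.
have H2 : \sum_(i in S) \sum_(j in S) (v 0 i ^+ 2 + v 0 j ^+ 2) / 2
    = \sum_(i in S) \sum_(j in S) v 0 i ^+ 2.
  transitivity (\sum_(i in S) \sum_(j in S) v 0 i ^+ 2 / 2
               + \sum_(i in S) \sum_(j in S) v 0 j ^+ 2 / 2).
    rewrite -big_split; apply: eq_bigr => i _; rewrite -big_split.
    by apply: eq_bigr => j _; rewrite mulrDl.
  rewrite [X in _ + X]exchange_big /= -big_split; apply: eq_bigr => i _.
  rewrite -big_split; apply: eq_bigr => j _ /=; by field.
apply: (le_trans H1); rewrite H2.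
under eq_bigr do rewrite sumr_const.
rewrite /norm2sq mulr_sumr [X in X <= _]big_mkcond /=; apply: ler_sum => i _.
case: ifP => _; first by rewrite mulr_natl.
exact: mulr_ge0 (ler0n _ _) (sqr_ge0 _).
Qed.

End Num.

Theorem lemma2 (R : realType) (p : nat) (bstar : 'rV[R]_p)
  (t0 : nat) (x0 : 'I_t0 -> 'rV[R]_p) (y0 : 'I_t0 -> R)
  (t : nat) (w : nat -> R) (x : nat -> 'rV[R]_p) (y : nat -> R)
  (kappa lambda : R) (bprev bhat : 'rV[R]_p) :
  (0 < t0)%N -> (0 < t)%N ->
  (forall j, (1 <= j <= t)%N -> 0 < w j) ->
  0 < kappa -> RSC (ell0 x0 y0) bstar kappa ->
  0 < lambda ->
  2 * norminf (grad (fun b => Lt x0 y0 t w x y b bprev) bstar) <= lambda ->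
  (forall b, Lt x0 y0 t w x y bhat bprev + lambda * norm1 bhat
             <= Lt x0 y0 t w x y b bprev + lambda * norm1 b) ->
  let s := #|supp bstar| in
  let g := norminf (grad (fun b => Lt x0 y0 t w x y b bprev) bstar) in
  norm1 (bhat - bstar) <= 16 * s%:R / kappa * (lambda + g)
  /\ 16 * s%:R / kappa * (lambda + g) <= 24 * s%:R / kappa * lambda
  /\ norm2sq (bhat - bstar) <= (lambda + g) / kappa * norm1 (bhat - bstar).
Proof.
move=> _ _ _ kp rsc lp hg opt s g.
set c := (\sum_(1 <= j < t.+1) (w j / \sum_(1 <= j < t.+1) w j) *:
            grad (ellj (x j) (y j)) bprev) - grad (ell0 x0 y0) bprev.
have LF : (fun b => Lt x0 y0 t w x y b bprev) = Ff x0 y0 c.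
  apply/funext => b; rewrite /Lt /Ff /c (innerC c) innerBr (innerC _ b) (innerC b).
  rewrite [inner b _]innerC; ring.
have LFb : forall b, Lt x0 y0 t w x y b bprev = Ff x0 y0 c b.
  by move=> b; rewrite -LF.
have gE : g = norminf (Mv x0 y0 c bstar) by rewrite /g LF grad_Ff.
set D := bhat - bstar.
set gv := Mv x0 y0 c bstar.
have bhE : bhat = 1 *: D + bstar by rewrite scale1r /D subrK.
have Lexp : Ff x0 y0 c bhat = Ff x0 y0 c bstar + inner D gv + qf x0 D.
  by rewrite {1}bhE Ff_expand mul1r expr1n mul1r.
have nsplit := norm1_split (supp bstar) D.
have ndiff := norm1_diff bstar D.
have bDE : bstar + D = bhat by rewrite /D addrC subrK.
rewrite bDE in ndiff.
have ib := inner_bound D gv.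
rewrite -/gv -gE in ib.
have op := opt bstar.
rewrite !LFb Lexp in op.
have q0 := qf_ge0 x0 D.
have g0 : 0 <= g by rewrite gE; exact: norminf_ge0.
have hg' : 2 * g <= lambda by [].
set a := norm1 (restr (supp bstar) D) in nsplit ndiff *.
set bb := norm1 (restr (~: supp bstar) D) in nsplit ndiff *.
have a0 : 0 <= a by apply: sumr_ge0 => i _; exact: normr_ge0.
have bb0 : 0 <= bb by apply: sumr_ge0 => i _; exact: normr_ge0.
set I := inner D gv in ib op Lexp *.
set q := qf x0 D in q0 op Lexp *.
have Ilow : - (g * norm1 D) <= I by move: ib; rewrite ler_norml => /andP[].
rewrite nsplit in Ilow.
have := ler_wpM2l (ltW lp) ndiff.
have key : I + q <= lambda * (a - bb) by nra.
have cone_D : cone (supp bstar) D.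
  rewrite /cone -/a -/bb.
  have h1 : 0 <= (lambda - 2 * g) * bb by apply: mulr_ge0 => //; lra.
  have h2 : 0 <= (lambda - 2 * g) * a by apply: mulr_ge0 => //; lra.
  have h3 : 0 <= lambda * (3 * a - bb) by nra.
  have : 0 <= 3 * a - bb by rewrite -(pmulr_rge0 _ lp).
  lra.
have RS : kappa * norm2sq D <= q.
  have /rsc := cone_D.
  have E1 : bstar + D = 1 *: D + bstar by rewrite scale1r addrC.
  rewrite ell0_Ff grad_Ff E1 Ff_expand mul1r expr1n mul1r.
  rewrite /q; move=> h; lra.
set N2 := norm2sq D in RS *.
have N0 : 0 <= N2 by apply: sumr_ge0 => i _; exact: sqr_ge0.
have hb1 : 0 <= lambda * bb by apply: mulr_ge0 => //; lra.
have hb2 : 0 <= (lambda - g) * bb by apply: mulr_ge0 => //; lra.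
have K1 : kappa * N2 <= (lambda + g) * a by nra.
have CS : a ^+ 2 <= s%:R * N2 by exact: cs_restr.
have s0 : 0 <= s%:R :> R by [].
have K2 : kappa * a <= s%:R * (lambda + g).
  have [->|apos] := eqVneq a 0; first by rewrite mulr0; apply: mulr_ge0 => //; lra.
  have ap : 0 < a by rewrite lt_def apos a0.
  rewrite -(ler_pM2r ap).
  have : kappa * a ^+ 2 <= kappa * (s%:R * N2) by rewrite ler_pM2l.
  nra.
rewrite nsplit; split; last split.
- rewrite mulrAC ler_pdivlMr // mulrC.
  have h4 : 0 <= s%:R * (lambda + g) by apply: mulr_ge0 => //; lra.
  have h5 : kappa * bb <= kappa * (3 * a) by rewrite ler_pM2l.
  nra.
- have u0 : 0 <= s%:R / kappa by apply: divr_ge0 => //; exact: ltW.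
  have -> : 16 * s%:R / kappa * (lambda + g) = (s%:R / kappa) * (16 * (lambda + g)) by ring.
  have -> : 24 * s%:R / kappa * lambda = (s%:R / kappa) * (24 * lambda) by ring.
  apply: ler_wpM2l => //; lra.
- rewrite mulrAC ler_pdivlMr // mulrC.
  nra.
Qed.
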